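(* Write the $\varepsilon$-expansions $$\Delta(x,\varepsilon)=\sum_{n\ge1}\Delta_n(x)\varepsilon^n,\qquad Y(x,\varepsilon)=\sum_{n\ge1}Y_n(x)\varepsilon^n.$$ Then for every $n\ge1$, both $\Delta_n(x)$ and $Y_n(x)$ are polynomials of degree $n$ in the quantities $f^{(l)}(x+k\mu)$, $0\le k\le q-1$, $0\le l\le n-1$. In particular $$\Delta_1(x)=-\overline f(x),\qquad Y_1(x)=-\frac{q+1}{2}\,\overline f(x)+\overline{\overline f}(x),$$ where $$\overline f(x)=\frac1q\sum_{k=0}^{q-1}f(x+k\mu),\qquad \overline{\overline f}(x)=\frac1q\sum_{k=0}^{q-1}(q-k)f(x+k\mu).$$
   Context: Fix integers $p$ and $q\ge1$ and put $\mu=2\pi p/q$. Let $f:\mathbb R\to\mathbb R$ be a $2\pi$-periodic real-analytic function. For real parameters $\varepsilon,\delta$ set $g(x)=-\delta-\varepsilon f(x)$ and consider the map $T_{\varepsilon,\delta}(x,y)=(x+y+\mu+g(x),\;y+g(x))$ on $\mathbb R^2$. Define ${}_nR$ and ${}_nS$ by $T^n_{\varepsilon,\delta}(x_0,y_0)=(x_0+n\mu+{}_nR,\;y_0+{}_nS)$. There exist $\bar{\bar\varepsilon},\eta>0$ and real-analytic functions $\Delta(x,\varepsilon)$ and $Y(x,\varepsilon)$, defined for $x\in\mathbb R$ and $|\varepsilon|<\bar{\bar\varepsilon}$ and vanishing at $\varepsilon=0$, such that $(\delta,y)=(\Delta(x,\varepsilon),Y(x,\varepsilon))$ is the unique solution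 with $|\delta|,|y|<\eta$ of ${}_qR(x,y,\varepsilon,\delta)={}_qS(x,y,\varepsilon,\delta)=0$. *)

(* Defs.v *)
From Stdlib Require Import Reals List.
From Coquelicot Require Import Coquelicot.
Import ListNotations.
Open Scope R_scope.

Definition rot_number (p : Z) (q : nat) : R := 2 * PI * IZR p / INR q.

Definition Tmap (mu eps delta : R) (f : R -> R) (z : R * R) : R * R :=
  let g := - delta - eps * f (fst z) in
  (fst z + snd z + mu + g, snd z + g).

Definition iterT (n : nat) (mu eps delta : R) (f : R -> R) (x0 y0 : R) : R * R :=
  Nat.iter n (Tmap mu eps delta f) (x0, y0).

Definition nR (n : nat) (mu : R) (f : R -> R) (x0 y0 eps delta : R) : R :=
  fst (iterT n mu eps delta f x0 y0) - x0 - INR n * mu.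

Definition nS (n : nat) (mu : R) (f : R -> R) (x0 y0 eps delta : R) : R :=
  snd (iterT n mu eps delta f x0 y0) - y0.

Definition real_analytic (f : R -> R) : Prop :=
  forall x0, exists r, 0 < r /\ exists a : nat -> R,
    forall x, Rabs (x - x0) < r -> is_pseries a (x - x0) (f x).

Definition real_analytic2_on (D : R -> R -> Prop) (F : R -> R -> R) : Prop :=
  forall x0 e0, D x0 e0 ->
  exists r, 0 < r /\ exists a : nat -> nat -> R,
    forall x e, D x e -> Rabs (x - x0) < r -> Rabs (e - e0) < r ->
      (forall i, ex_series (fun j => Rabs (a i j * (x - x0) ^ i * (e - e0) ^ j))) /\
      ex_series (fun i => Series (fun j => Rabs (a i j * (x - x0) ^ i * (e - e0) ^ j))) /\
      F x e = Series (fun i => Series (fun j => a i j * (x - x0) ^ i * (e - e0) ^ j)).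

Definition solution_data (p : Z) (q : nat) (f : R -> R) (eb eta : R)
  (Delta Y : R -> R -> R) : Prop :=
  let mu := rot_number p q in
  (forall x, f (x + 2 * PI) = f x) /\
  real_analytic f /\
  0 < eb /\ 0 < eta /\
  real_analytic2_on (fun _ e => Rabs e < eb) Delta /\
  real_analytic2_on (fun _ e => Rabs e < eb) Y /\
  (forall x, Delta x 0 = 0 /\ Y x 0 = 0) /\
  (forall x e, Rabs e < eb ->
     Rabs (Delta x e) < eta /\ Rabs (Y x e) < eta /\
     nR q mu f x (Y x e) e (Delta x e) = 0 /\
     nS q mu f x (Y x e) e (Delta x e) = 0) /\
  (forall x e d y, Rabs e < eb -> Rabs d < eta -> Rabs y < eta ->
     nR q mu f x y e d = 0 -> nS q mu f x y e d = 0 ->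
     d = Delta x e /\ y = Y x e).

Definition eps_coeff (F : R -> R -> R) (n : nat) (x : R) : R :=
  Derive_n (fun e => F x e) n 0 / INR (Factorial.fact n).

(** Polynomials with real coefficients in variables v_(k,l):
    a list of monomials (coefficient, list of variable indices, with
    multiplicity). *)
Definition monomial : Type := (R * list (nat * nat))%type.
Definition polynomial : Type := list monomial.

Definition eval_monomial (m : monomial) (v : nat -> nat -> R) : R :=
  fst m * fold_right (fun kl acc => v (fst kl) (snd kl) * acc) 1 (snd m).

Definition eval_poly (P : polynomial) (v : nat -> nat -> R) : R :=
  fold_right (fun m acc => eval_monomial m v + acc) 0 P.

Definition poly_vars_deg (q n d : nat) (P : polynomial) : Prop :=
  List.Forall (fun m =>
    List.Forall (fun kl => (fst kl < q)%nat /\ (snd kl < n)%nat) (snd m) /\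
    (length (snd m) <= d)%nat) P.

Definition fbar (q : nat) (mu : R) (f : R -> R) (x : R) : R :=
  / INR q * fold_right Rplus 0 (map (fun k => f (x + INR k * mu)) (seq 0 q)).

Definition fbarbar (q : nat) (mu : R) (f : R -> R) (x : R) : R :=
  / INR q * fold_right Rplus 0
    (map (fun k => (INR q - INR k) * f (x + INR k * mu)) (seq 0 q)).

(* Main.v *)
Require Import Defs.
From Stdlib Require Import Reals List Lra Lia ZArith FunctionalExtensionality.
From Coquelicot Require Import Coquelicot.
Open Scope R_scope.

Ltac req := match goal with |- @eq _ ?a ?b => change (@eq R a b) end.

Lemma ball_loc (r e : R) : Rabs e < r -> locally e (fun t : R => Rabs t < r).
Proof.
  intros H. assert (Hp : 0 < r - Rabs e) by lra.
  exists (mkposreal _ Hp).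
  change (forall t:R, Rabs (t - e) < r - Rabs e -> Rabs t < r).
  intros t Hb.
  pose proof (Rabs_triang (t - e) e).
  replace (t - e + e) with t in H0 by ring. lra.
Qed.

Lemma dplus (f g : R -> R) x a b : is_derive f x a -> is_derive g x b ->
  is_derive (fun t => f t + g t) x (a + b).
Proof. intros Ha Hb. exact (is_derive_plus f g x a b Ha Hb). Qed.
Lemma dmult (f g : R -> R) x a b : is_derive f x a -> is_derive g x b ->
  is_derive (fun t => f t * g t) x (a * g x + f x * b).
Proof. intros Ha Hb. exact (is_derive_mult f g x a b Ha Hb Rmult_comm). Qed.
Lemma dcomp (f g : R -> R) x a b : is_derive f (g x) a -> is_derive g x b ->
  is_derive (fun t => f (g t)) x (b * a).
Proof. intros Ha Hb. exact (is_derive_comp f g x a b Ha Hb). Qed.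
Lemma dconst (c x : R) : is_derive (fun _ => c) x 0.
Proof. exact (is_derive_const c x). Qed.
Lemma did (x : R) : is_derive (fun t => t) x 1.
Proof. exact (is_derive_id x). Qed.
Lemma dval (f : R -> R) x a b : is_derive f x a -> a = b -> is_derive f x b.
Proof. intros H E; subst; auto. Qed.
Lemma dext (f g : R -> R) x a b : (forall t, f t = g t) -> a = b -> is_derive f x a -> is_derive g x b.
Proof. intros H1 H2 H. subst b. apply is_derive_ext with f; auto. Qed.

Inductive kind := KD | KY | KE | KF (k : nat).
Inductive pexpr :=
 | PC (c : R) | PV (a : kind) (l : nat) | PAdd (P Q : pexpr) | PMul (P Q : pexpr).

Fixpoint ev (env : kind -> nat -> R) (P : pexpr) : R :=
  match P with
  | PC c => c
  | PV a l => env a l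
  | PAdd P Q => ev env P + ev env Q
  | PMul P Q => ev env P * ev env Q
  end.

Fixpoint dX (k : nat) : pexpr * pexpr :=
  match k with
  | O => (PC 0, PV KY 1)
  | S k => let (a, b) := dX k in
     let b' := PAdd (PAdd b (PMul (PC (-1)) (PV KD 1)))
                (PMul (PC (-1)) (PAdd (PMul (PV KE 1) (PV (KF k) 0))
                                      (PMul (PV KE 0) (PMul (PV (KF k) 1) a)))) in
     (PAdd a b', b')
  end.

Definition dv (a : kind) (l : nat) : pexpr :=
  match a with
  | KF k => PMul (PV (KF k) (S l)) (fst (dX k))
  | _ => PV a (S l)
  end.

Fixpoint der (P : pexpr) : pexpr :=
  match P with
  | PC _ => PC 0
  | PV a l => dv a l
  | PAdd P Q => PAdd (der P) (der Q)
  | PMul P Q => PAdd (PMul (der P) Q) (PMul P (der Q))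
  end.

Lemma der_correct (envf : R -> kind -> nat -> R) (e : R) :
  (forall a l, is_derive (fun t => envf t a l) e (ev (envf e) (dv a l))) ->
  forall P, is_derive (fun t => ev (envf t) P) e (ev (envf e) (der P)).
Proof.
  intros H P; induction P; simpl.
  - apply dconst.
  - apply H.
  - apply dplus; auto.
  - apply dmult; auto.
Qed.

Definition Sm (r : R) (g : R -> R) : Prop :=
  forall n e, Rabs e < r -> ex_derive (Derive_n g n) e.

Lemma Dn_ev (r : R) (envf : R -> kind -> nat -> R) :
  (forall e, Rabs e < r -> forall a l, is_derive (fun t => envf t a l) e (ev (envf e) (dv a l))) ->
  forall P n e, Rabs e < r ->
    Derive_n (fun t => ev (envf t) P) n e = ev (envf e) (Nat.iter n der P).
Proof.
  intros H P n. induction n; intros e He.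
  - reflexivity.
  - assert (Hl : locally e (fun t => Derive_n (fun t => ev (envf t) P) n t = ev (envf t) (Nat.iter n der P))).
    { eapply filter_imp; [|apply (ball_loc r e He)]. intros t Ht. apply IHn; auto. }
    simpl. rewrite (Derive_ext_loc _ _ e Hl).
    apply is_derive_unique. apply der_correct. auto.
Qed.

Lemma Sm_ev (r : R) (envf : R -> kind -> nat -> R) :
  (forall e, Rabs e < r -> forall a l, is_derive (fun t => envf t a l) e (ev (envf e) (dv a l))) ->
  forall P, Sm r (fun t => ev (envf t) P).
Proof.
  intros H P n e He.
  assert (Hl : locally e (fun t => ev (envf t) (Nat.iter n der P) = Derive_n (fun t => ev (envf t) P) n t)).
  { eapply filter_imp; [|apply (ball_loc r e He)]. intros t Ht. symmetry. apply (Dn_ev r); auto. }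
  eapply ex_derive_ext_loc; [exact Hl|].
  eexists. apply der_correct. auto.
Qed.

Lemma Sm_ext (r : R) (g h : R -> R) : (forall t, g t = h t) -> Sm r g -> Sm r h.
Proof.
  intros E H n e He. assert (g = h) by (apply functional_extensionality; auto). subst; auto.
Qed.

Lemma Sm_loc (r : R) g e n : Sm r g -> Rabs e < r ->
  locally e (fun y => forall k, (k <= n)%nat -> ex_derive_n g k y).
Proof.
  intros H He. eapply filter_imp; [|apply (ball_loc r e He)].
  intros t Ht k _. destruct k; simpl; auto.
Qed.

Lemma leib (r : R) (G : R -> R) : Sm r G ->
  forall n e, Rabs e < r ->
  Derive_n (fun t => t * G t) (S n) e = e * Derive_n G (S n) e + INR (S n) * Derive_n G n e.
Proof.
  intros H n. induction n; intros e He.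
  - simpl. apply is_derive_unique.
    eapply dval; [apply dmult; [apply did| apply Derive_correct; apply (H 0%nat e He)]|].
    simpl. change (fun x : R => G x) with G. req. ring.
  - assert (Hl : locally e (fun t => Derive_n (fun t => t * G t) (S n) t =
        t * Derive_n G (S n) t + INR (S n) * Derive_n G n t)).
    { eapply filter_imp; [|apply (ball_loc r e He)]. intros t Ht. apply IHn; auto. }
    change (Derive (Derive_n (fun t => t * G t) (S n)) e =
       e * Derive (Derive_n G (S n)) e + INR (S (S n)) * Derive_n G (S n) e).
    rewrite (Derive_ext_loc _ _ e Hl).
    apply is_derive_unique.
    eapply dval; [apply dplus; [apply dmult; [apply did| apply Derive_correct; apply (H (S n) e He)]
       | apply dmult; [apply dconst| apply Derive_correct; apply (H n e He)]]|].
    simpl Derive_n. cbv beta. rewrite (S_INR (S n)). req. ring.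
Qed.

Lemma leib0 (r : R) (G : R -> R) : 0 < r -> Sm r G ->
  forall n, Derive_n (fun t => t * G t) (S n) 0 = INR (S n) * Derive_n G n 0.
Proof.
  intros Hr H n. rewrite (leib r G H n 0); [ring| rewrite Rabs_R0; auto].
Qed.


Definition xsf mu f (D Y : R -> R) x k e := fst (iterT k mu e (D e) f x (Y e)).
Definition ysf mu f (D Y : R -> R) x k e := snd (iterT k mu e (D e) f x (Y e)).

Lemma iterT_S k mu e d f x y : iterT (S k) mu e d f x y = Tmap mu e d f (iterT k mu e d f x y).
Proof. reflexivity. Qed.

Lemma xsf_S mu f D Y x k e :
  xsf mu f D Y x (S k) e = xsf mu f D Y x k e + ysf mu f D Y x (S k) e + mu.
Proof. unfold xsf, ysf. rewrite !iterT_S. destruct (iterT k mu e (D e) f x (Y e)) as [u v]. unfold Tmap. simpl. ring. Qed.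
Lemma ysf_S mu f D Y x k e :
  ysf mu f D Y x (S k) e = ysf mu f D Y x k e + (-1) * D e + (-1) * (e * f (xsf mu f D Y x k e)).
Proof. unfold xsf, ysf. rewrite !iterT_S. destruct (iterT k mu e (D e) f x (Y e)) as [u v]. unfold Tmap. simpl. ring. Qed.
Lemma xsf_0 mu f D Y x e : xsf mu f D Y x 0 e = x.
Proof. reflexivity. Qed.
Lemma ysf_0 mu f D Y x e : ysf mu f D Y x 0 e = Y e.
Proof. reflexivity. Qed.

Definition envf mu f (D Y : R -> R) x (e : R) (a : kind) (l : nat) : R :=
  match a with
  | KD => Derive_n D l e
  | KY => Derive_n Y l e
  | KE => match l with O => e | 1%nat => 1 | _ => 0 end
  | KF k => Derive_n f l (xsf mu f D Y x k e)
  end.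

Definition fsmooth (f : R -> R) := forall n y, ex_derive (Derive_n f n) y.

Lemma xs_der mu f D Y x r : Sm r D -> Sm r Y -> fsmooth f ->
  forall k e, Rabs e < r ->
  is_derive (xsf mu f D Y x k) e (ev (envf mu f D Y x e) (fst (dX k))) /\
  is_derive (ysf mu f D Y x k) e (ev (envf mu f D Y x e) (snd (dX k))).
Proof.
  intros HD HY Hf k e He. induction k.
  - simpl. split.
    + exact (dconst x e).
    + apply Derive_correct. apply (HY 0%nat e He).
  - simpl. destruct (dX k) as [a b]. simpl in IHk |- *. destruct IHk as [IHx IHy].
    assert (Hy : is_derive (ysf mu f D Y x (S k)) e
       (ev (envf mu f D Y x e) b + -1 * Derive_n D 1 e +
        -1 * (1 * Derive_n f 0 (xsf mu f D Y x k e) +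
              e * (Derive_n f 1 (xsf mu f D Y x k e) * ev (envf mu f D Y x e) a)))).
    { assert (E : ysf mu f D Y x (S k) = fun t => ysf mu f D Y x k t + (-1) * D t + (-1) * (t * f (xsf mu f D Y x k t)))
        by (apply functional_extensionality; intro; apply ysf_S).
      rewrite E. eapply dval.
      { apply dplus; [apply dplus|].
        - exact IHy.
        - apply dmult; [apply dconst| apply Derive_correct; apply (HD 0%nat e He)].
        - apply dmult; [apply dconst|]. apply dmult; [apply did|].
          apply (dcomp f (xsf mu f D Y x k)); [apply Derive_correct; apply (Hf 0%nat)| exact IHx]. }
      simpl. cbv beta. change (fun x : R => D x) with D. change (fun x : R => f x) with f. req. ring. }
    split; [|exact Hy].
    assert (E : xsf mu f D Y x (S k) = fun t => xsf mu f D Y x k t + ysf mu f D Y x (S k) t + mu)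
        by (apply functional_extensionality; intro; apply xsf_S).
    rewrite E. eapply dval.
    { apply dplus; [apply dplus|]; [exact IHx| exact Hy| apply dconst]. }
    simpl. change (fun x : R => D x) with D. change (fun x : R => f x) with f. req. ring.
Qed.

Lemma env_der mu f D Y x r : Sm r D -> Sm r Y -> fsmooth f ->
  forall e, Rabs e < r -> forall a l,
  is_derive (fun t => envf mu f D Y x t a l) e (ev (envf mu f D Y x e) (dv a l)).
Proof.
  intros HD HY Hf e He a l. destruct a; simpl.
  - apply Derive_correct. apply HD; auto.
  - apply Derive_correct. apply HY; auto.
  - destruct l as [|[|l]].
    + apply did.
    + apply dconst.
    + apply dconst.
  - eapply dval.
    { apply (dcomp (Derive_n f l) (xsf mu f D Y x k)).
      - apply Derive_correct. apply Hf.
      - apply (xs_der mu f D Y x r HD HY Hf k e He). }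
    req. ring.
Qed.


Lemma eval_poly_app P1 P2 v : eval_poly (P1 ++ P2) v = eval_poly P1 v + eval_poly P2 v.
Proof. induction P1; simpl; [ring|rewrite IHP1; ring]. Qed.

Lemma fold_mon (v : nat -> nat -> R) l a :
  fold_right (fun kl acc => v (fst kl) (snd kl) * acc) a l =
  fold_right (fun kl acc => v (fst kl) (snd kl) * acc) 1 l * a.
Proof. induction l; simpl; [ring|rewrite IHl; ring]. Qed.

Lemma eval_mon_mul c1 l1 c2 l2 v :
  eval_monomial (c1 * c2, l1 ++ l2) v = eval_monomial (c1, l1) v * eval_monomial (c2, l2) v.
Proof. unfold eval_monomial; simpl. rewrite fold_right_app, fold_mon. ring. Qed.

Definition pmul (P1 P2 : polynomial) : polynomial :=
  flat_map (fun m1 => map (fun m2 => (fst m1 * fst m2, snd m1 ++ snd m2)) P2) P1.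

Lemma eval_map_mon c1 l1 P2 v : eval_poly (map (fun m2 => (c1 * fst m2, l1 ++ snd m2)) P2) v = eval_monomial (c1, l1) v * eval_poly P2 v.
Proof.
  induction P2 as [|[c2 l2] P2 IH2]; simpl; [ring|].
  rewrite IH2. rewrite (eval_mon_mul c1 l1 c2 l2 v). ring.
Qed.

Lemma eval_pmul P1 P2 v : eval_poly (pmul P1 P2) v = eval_poly P1 v * eval_poly P2 v.
Proof.
  induction P1 as [|[c1 l1] P1 IH]; simpl; [ring|].
  rewrite eval_poly_app, IH. rewrite eval_map_mon. ring.
Qed.

Definition pvd (q L : nat) (d : Z) (P : polynomial) : Prop :=
  List.Forall (fun m => List.Forall (fun kl => (fst kl < q)%nat /\ (snd kl < L)%nat) (snd m) /\
                   (Z.of_nat (length (snd m)) <= d)%Z) P.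

Record dat := mkdat { df : R -> R; deb : R; deta : R; dD : R -> R -> R; dY : R -> R -> R; dx : R }.
Definition good p q dt := solution_data p q (df dt) (deb dt) (deta dt) (dD dt) (dY dt).
Definition tgt p q dt : nat -> nat -> R :=
  fun k l => Derive_n (df dt) l (dx dt + INR k * rot_number p q).

Definition Uni p q (d : Z) (L : nat) (V : dat -> R) : Prop :=
  exists P, pvd q L d P /\ forall dt, good p q dt -> V dt = eval_poly P (tgt p q dt).

Lemma Uni_ext p q d L (V W : dat -> R) : (forall dt, good p q dt -> V dt = W dt) -> Uni p q d L V -> Uni p q d L W.
Proof. intros E [P [H1 H2]]. exists P. split; auto. intros dt G. rewrite <- E; auto. Qed.

Lemma Uni_mono p q d d' L L' V : (d <= d')%Z -> (L <= L')%nat -> Uni p q d L V -> Uni p q d' L' V.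
Proof.
  intros Hd HL [P [H1 H2]]. exists P. split; auto.
  unfold pvd in *. eapply Forall_impl; [|exact H1]. simpl. intros m [Hm1 Hm2]. split; [|lia].
  eapply Forall_impl; [|exact Hm1]. simpl. intros kl [? ?]; split; lia.
Qed.

Lemma Uni_zero p q d L : Uni p q d L (fun _ => 0).
Proof. exists nil. split; [constructor|]. intros; reflexivity. Qed.

Lemma Uni_const p q L c : Uni p q 0 L (fun _ => c).
Proof. exists ((c, nil) :: nil). split.
  - constructor; [|constructor]. simpl. split; [constructor|lia].
  - intros. unfold eval_poly, eval_monomial; simpl. ring.
Qed.

Lemma Uni_var p q L k l : (k < q)%nat -> (l < L)%nat -> Uni p q 1 L (fun dt => tgt p q dt k l).
Proof. intros Hk Hl. exists ((1, (k, l) :: nil) :: nil). split.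
  - constructor; [|constructor]. simpl. split; [constructor; [simpl; lia|constructor]|lia].
  - intros. unfold eval_poly, eval_monomial; simpl. ring.
Qed.

Lemma Uni_add p q d1 d2 L V W : Uni p q d1 L V -> Uni p q d2 L W -> Uni p q (Z.max d1 d2) L (fun dt => V dt + W dt).
Proof.
  intros [P1 [H1 E1]] [P2 [H2 E2]]. exists (P1 ++ P2). split.
  - unfold pvd in *. apply Forall_app. split.
    + eapply Forall_impl; [|exact H1]. intros m [? ?]; split; auto; lia.
    + eapply Forall_impl; [|exact H2]. intros m [? ?]; split; auto; lia.
  - intros dt G. rewrite eval_poly_app, E1, E2; auto.
Qed.

Lemma Uni_mul p q d1 d2 L V W : Uni p q d1 L V -> Uni p q d2 L W -> Uni p q (d1 + d2) L (fun dt => V dt * W dt).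
Proof.
  intros [P1 [H1 E1]] [P2 [H2 E2]]. exists (pmul P1 P2). split.
  - unfold pvd in *. rewrite Forall_forall in *. intros m Hm.
    unfold pmul in Hm. apply in_flat_map in Hm. destruct Hm as [m1 [Hm1 Hm]].
    apply in_map_iff in Hm. destruct Hm as [m2 [Em Hm2]]. subst m. simpl.
    destruct (H1 m1 Hm1) as [A1 B1]. destruct (H2 m2 Hm2) as [A2 B2].
    split.
    + apply Forall_app; auto.
    + rewrite length_app. lia.
  - intros dt G. rewrite eval_pmul, E1, E2; auto.
Qed.


Lemma is_series_zero : is_series (fun _ : nat => 0) 0.
Proof.
  apply is_series_Reals. intros eps Heps. exists 0%nat. intros n _.
  assert (Z : forall z, z = 0 -> Rabs z < eps) by (intros z ->; rewrite Rabs_R0; auto).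
  unfold R_dist. apply Z. rewrite sum_cte. ring.
Qed.

Lemma series_first (u : nat -> R) : (forall i, u (S i) = 0) -> Series u = u 0%nat.
Proof.
  intros H. apply is_series_unique. apply is_series_Reals. intros eps Heps. exists 0%nat. intros n _.
  assert (E : sum_f_R0 u n = u 0%nat).
  { induction n; simpl; auto. rewrite IHn, H. ring. }
  assert (Z : forall z, z = 0 -> Rabs z < eps) by (intros z ->; rewrite Rabs_R0; auto).
  unfold R_dist. apply Z. rewrite E. ring.
Qed.

Lemma Series_zero (u : nat -> R) : (forall i, u i = 0) -> Series u = 0.
Proof. intros H. apply is_series_unique. eapply is_series_ext; [|exact is_series_zero]. intros; rewrite H; auto. Qed.

Lemma CV_disk_radius b r : CV_disk b r -> Rbar_le r (CV_radius b).
Proof. intros H. exact (proj1 (Lub_Rbar_correct (CV_disk b)) r H). Qed.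

Lemma LocPS rho (g : R -> R) b :
  (forall e, Rabs e < rho -> g e = PSeries b e) ->
  (forall e, Rabs e < rho -> Rbar_lt (Rabs e) (CV_radius b)) -> Sm rho g.
Proof.
  intros Hg Hb n e He.
  assert (Hl : locally e (fun t => Derive_n (PSeries b) n t = Derive_n g n t)).
  { eapply filter_imp; [|apply (ball_loc rho e He)]. intros t Ht.
    apply Derive_n_ext_loc. eapply filter_imp; [|apply (ball_loc rho t Ht)].
    intros s Hs. symmetry; auto. }
  eapply ex_derive_ext_loc; [exact Hl|].
  exact (ex_derive_n_PSeries (S n) b e (Hb e He)).
Qed.

Lemma radius_from_disks b rho :
  (forall r, 0 <= r < rho -> CV_disk b r) ->
  forall e, Rabs e < rho -> Rbar_lt (Rabs e) (CV_radius b).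
Proof.
  intros H e He. set (r := (Rabs e + rho) / 2).
  assert (Hr : 0 <= r < rho) by (unfold r; pose proof (Rabs_pos e); lra).
  pose proof (CV_disk_radius b r (H r Hr)) as Hle.
  apply Rbar_lt_le_trans with (Finite r); auto. simpl. unfold r; lra.
Qed.

Lemma analytic2_smooth (Delta : R -> R -> R) eb x :
  0 < eb -> real_analytic2_on (fun _ e => Rabs e < eb) Delta ->
  exists rho, 0 < rho /\ rho <= eb /\ Sm rho (fun e => Delta x e).
Proof.
  intros Heb HA. assert (H0 : Rabs 0 < eb) by (rewrite Rabs_R0; auto). destruct (HA x 0 H0) as [r [Hr [a Ha]]].
  set (rho := Rmin r eb). assert (Hrho : 0 < rho) by (unfold rho; apply Rmin_glb_lt; auto).
  exists rho. split; [auto|]. split; [apply Rmin_r|].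
  assert (Hin : forall e, Rabs e < rho -> Rabs e < eb /\ Rabs (x - x) < r /\ Rabs (e - 0) < r).
  { intros e He. assert (rho <= r) by apply Rmin_l. assert (rho <= eb) by apply Rmin_r.
    replace (x - x) with 0 by ring. replace (e - 0) with e by ring. rewrite Rabs_R0. repeat split; lra. }
  apply (LocPS rho _ (a 0%nat)).
  - intros e He. destruct (Hin e He) as (H1 & H2 & H3).
    destruct (Ha x e H1 H2 H3) as (_ & _ & E). rewrite E.
    rewrite series_first.
    + unfold PSeries. apply Series_ext. intros j. simpl. rewrite Rminus_0_r. ring.
    + intros i. apply Series_zero. intros j. replace (x - x) with 0 by ring. simpl. ring.
  - apply radius_from_disks. intros r' Hr'.
    assert (Hr'' : Rabs r' < rho) by (rewrite Rabs_pos_eq; lra).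
    destruct (Hin r' Hr'') as (H1 & H2 & H3).
    destruct (Ha x r' H1 H2 H3) as (E & _ & _).
    specialize (E 0%nat). unfold CV_disk.
    eapply ex_series_ext; [|exact E]. intros j. simpl. f_equal. rewrite Rminus_0_r. ring.
Qed.

Lemma conv_bounded (u : nat -> R) : is_lim_seq u 0 -> exists M, forall n, Rabs (u n) <= M.
Proof.
  intros H. apply is_lim_seq_spec in H. destruct (H (mkposreal 1 Rlt_0_1)) as [N HN].
  set (S := fix S (k : nat) : R := match k with O => 0 | S k => S k + Rabs (u k) end).
  assert (Spos : forall k, 0 <= S k).
  { induction k; simpl; [lra|]. pose proof (Rabs_pos (u k)). lra. }
  assert (Sle : forall k n, (n < k)%nat -> Rabs (u n) <= S k).
  { induction k; intros n Hn; [lia|]. simpl.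
    destruct (Nat.eq_dec n k) as [->|Hne].
    - pose proof (Spos k). lra.
    - pose proof (IHk n ltac:(lia)). pose proof (Rabs_pos (u k)). lra. }
  exists (S N + 1). intros n. destruct (le_lt_dec N n) as [Hle|Hlt].
  - specialize (HN n Hle). simpl in HN. replace (u n - 0) with (u n) in HN by ring.
    pose proof (Spos N). lra.
  - pose proof (Sle N n Hlt). lra.
Qed.

Lemma analytic_fsmooth f : real_analytic f -> fsmooth f.
Proof.
  intros HA n y. destruct (HA y) as [r [Hr [a Ha]]].
  set (g := fun h => f (h + y)).
  assert (Hrad : Rbar_le (r / 2) (CV_radius a)).
  { assert (Hc : is_pseries a (r / 2 + y - y) (f (r / 2 + y))).
    { apply Ha. replace (r / 2 + y - y) with (r / 2) by ring. rewrite Rabs_pos_eq; lra. }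
    replace (r / 2 + y - y) with (r / 2) in Hc by ring.
    assert (Hex : ex_series (fun n => a n * (r / 2) ^ n)).
    { apply ex_pseries_R. eexists; exact Hc. }
    destruct (conv_bounded _ (ex_series_lim_0 _ Hex)) as [M HM].
    exact (proj1 (CV_radius_bounded a) (r / 2) (ex_intro _ M HM)). }
  assert (Sg : Sm (r / 2) g).
  { apply (LocPS (r / 2) g a).
    - intros e He. symmetry. apply is_pseries_unique. unfold g.
      replace e with (e + y - y) at 1 by ring. apply Ha.
      replace (e + y - y) with e by ring. lra.
    - intros e He. eapply Rbar_lt_le_trans; [|exact Hrad]. simpl. exact He. }
  assert (Ef : Derive_n f n = fun z => Derive_n g n (z + - y)).
  { apply functional_extensionality. intros z. rewrite <- Derive_n_comp_trans.
    apply Derive_n_ext. intros t. unfold g. f_equal. ring. }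
  rewrite Ef.
  apply (ex_derive_comp (Derive_n g n) (fun z => z + - y)).
  - apply Sg. replace (y + - y) with 0 by ring. rewrite Rabs_R0. lra.
  - eexists. apply dplus; [apply did| apply dconst].
Qed.


Fixpoint wdeg (w : kind -> nat -> Z) (P : pexpr) : Z :=
  match P with
  | PC _ => 0%Z
  | PV a l => w a l
  | PAdd P Q => Z.max (wdeg w P) (wdeg w Q)
  | PMul P Q => (wdeg w P + wdeg w Q)%Z
  end.

Fixpoint allv (Pr : kind -> nat -> Prop) (P : pexpr) : Prop :=
  match P with
  | PC _ => True
  | PV a l => Pr a l
  | PAdd P Q | PMul P Q => allv Pr P /\ allv Pr Q
  end.

Lemma allv_imp (Pr1 Pr2 : kind -> nat -> Prop) P :
  (forall a l, Pr1 a l -> Pr2 a l) -> allv Pr1 P -> allv Pr2 P.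
Proof. intros H; induction P; simpl; intuition. Qed.

Lemma Uni_ev p q (env0 : dat -> kind -> nat -> R) w L P :
  allv (fun a l => Uni p q (w a l) L (fun dt => env0 dt a l)) P ->
  Uni p q (wdeg w P) L (fun dt => ev (env0 dt) P).
Proof.
  induction P; simpl; intros H.
  - apply Uni_const.
  - exact H.
  - destruct H. apply Uni_add; auto.
  - destruct H. apply Uni_mul; auto.
Qed.

Definition w0 (a : kind) (l : nat) : Z :=
  match a with
  | KF _ => 1%Z
  | KE => (Z.of_nat l - 1)%Z
  | _ => Z.of_nat l
  end.

Definition VB (K m : nat) (a : kind) (l : nat) : Prop :=
  match a with
  | KF k => (k <= K)%nat /\ (l <= m)%nat
  | KE => True
  | _ => (l <= m)%nat
  end.

Definition VB1 (K : nat) (a : kind) (l : nat) : Prop :=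
  match a with
  | KF k => (k < K)%nat /\ (l <= 1)%nat
  | KE => True
  | _ => (l <= 1)%nat
  end.

Lemma dX_props k :
  (wdeg w0 (fst (dX k)) <= 1)%Z /\ (wdeg w0 (snd (dX k)) <= 1)%Z /\
  allv (VB1 k) (fst (dX k)) /\ allv (VB1 k) (snd (dX k)).
Proof.
  induction k; cbn -[Z.add Z.max Z.sub Z.of_nat].
  - repeat split; lia.
  - destruct (dX k) as [a b]. cbn -[Z.add Z.max Z.sub Z.of_nat] in *. destruct IHk as [Ha [Hb [Va Vb]]].
    assert (Va' : allv (VB1 (S k)) a) by (eapply allv_imp; [|exact Va]; intros [] l; simpl; intuition lia).
    assert (Vb' : allv (VB1 (S k)) b) by (eapply allv_imp; [|exact Vb]; intros [] l; simpl; intuition lia).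
    repeat split; auto; try lia.
Qed.

Lemma der_wdeg P : (wdeg w0 (der P) <= wdeg w0 P + 1)%Z.
Proof.
  induction P; cbn -[Z.add Z.max Z.sub Z.of_nat]; try lia.
  destruct a as [| | |k]; cbn -[Z.add Z.max Z.sub Z.of_nat]; try lia.
  destruct (dX_props k) as [H _]. lia.
Qed.

Lemma der_VB K m P : allv (VB K m) P -> allv (VB K (S m)) (der P).
Proof.
  induction P; simpl; intros H.
  - auto.
  - destruct a as [| | |k]; simpl in *; try lia; auto.
    destruct H as [H1 H2]. split; [lia|].
    destruct (dX_props k) as [_ [_ [V _]]].
    eapply allv_imp; [|exact V]. intros [] l'; simpl; intuition lia.
  - destruct H; split; auto.
  - destruct H as [H1 H2]. split; split; auto;
    eapply allv_imp; try eassumption; intros [] l'; simpl; intuition lia.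
Qed.

Lemma iter_props K k m : (k <= K)%nat ->
  (wdeg w0 (Nat.iter m der (PV (KF k) 0)) <= Z.of_nat m + 1)%Z /\
  allv (VB K m) (Nat.iter m der (PV (KF k) 0)).
Proof.
  intros Hk. induction m.
  - simpl. split; [lia|]. split; lia.
  - destruct IHm as [H1 H2]. simpl Nat.iter. split.
    + pose proof (der_wdeg (Nat.iter m der (PV (KF k) 0))). lia.
    + apply der_VB; auto.
Qed.


Fixpoint sumN (g : nat -> R) (n : nat) : R :=
  match n with O => 0 | S n => sumN g n + g n end.

Definition Dfun (dt : dat) := fun e => dD dt (dx dt) e.
Definition Yfun (dt : dat) := fun e => dY dt (dx dt) e.
Definition XS p q dt k e := xsf (rot_number p q) (df dt) (Dfun dt) (Yfun dt) (dx dt) k e.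
Definition YS p q dt k e := ysf (rot_number p q) (df dt) (Dfun dt) (Yfun dt) (dx dt) k e.
Definition ENV p q dt e := envf (rot_number p q) (df dt) (Dfun dt) (Yfun dt) (dx dt) e.
Definition Fj p q dt j e := df dt (XS p q dt j e).
Definition hj p q dt j e := e * Fj p q dt j e.
Definition Sf p q dt k e := sumN (fun j => hj p q dt j e) k.
Definition Tf p q dt k e := sumN (fun i => Sf p q dt (S i) e) k.
Definition cN k := sumN (fun i => INR (S i)) k.

Lemma YS_closed p q dt k e :
  YS p q dt k e = Yfun dt e - INR k * Dfun dt e - Sf p q dt k e.
Proof.
  induction k.
  - unfold YS, Sf; simpl. rewrite ysf_0. ring.
  - unfold YS in *. rewrite ysf_S, IHk. unfold Sf, hj, Fj, XS; simpl sumN. rewrite S_INR. ring.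
Qed.

Lemma XS_closed p q dt k e :
  XS p q dt k e = dx dt + INR k * rot_number p q + INR k * Yfun dt e - cN k * Dfun dt e - Tf p q dt k e.
Proof.
  induction k.
  - unfold XS, Tf, cN; simpl. rewrite xsf_0. ring.
  - unfold XS in *. rewrite xsf_S, IHk. fold (YS p q dt (S k) e). rewrite YS_closed.
    unfold Tf, cN.
    change (sumN (fun i => INR (S i)) (S k)) with (sumN (fun i => INR (S i)) k + INR (S k)).
    change (sumN (fun i => Sf p q dt (S i) e) (S k)) with (sumN (fun i => Sf p q dt (S i) e) k + Sf p q dt (S k) e).
    rewrite S_INR. ring.
Qed.

Lemma sumN_ext g h n : (forall i, g i = h i) -> sumN g n = sumN h n.
Proof. intros E; induction n; simpl; auto. rewrite IHn, E; auto. Qed.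

Lemma sumN_zero g n : (forall i, g i = 0) -> sumN g n = 0.
Proof. intros E; induction n; simpl; auto. rewrite IHn, E; ring. Qed.

Lemma good_unpack p q dt : good p q dt ->
  Dfun dt 0 = 0 /\ Yfun dt 0 = 0 /\
  forall e, Rabs e < deb dt ->
    nR q (rot_number p q) (df dt) (dx dt) (Yfun dt e) e (Dfun dt e) = 0 /\
    nS q (rot_number p q) (df dt) (dx dt) (Yfun dt e) e (Dfun dt e) = 0.
Proof.
  intros G. unfold good, solution_data in G. cbv zeta in G.
  destruct G as (_ & _ & _ & _ & _ & _ & H0 & Hsol & _).
  unfold Dfun, Yfun. split; [apply H0|]. split; [apply H0|].
  intros e He. destruct (Hsol (dx dt) e He) as (_ & _ & A & B). auto.
Qed.

Lemma Sf0 p q dt k : Sf p q dt k 0 = 0.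
Proof. unfold Sf. apply sumN_zero. intros; unfold hj; ring. Qed.
Lemma Tf0 p q dt k : Tf p q dt k 0 = 0.
Proof. unfold Tf. apply sumN_zero. intros; apply Sf0. Qed.

Lemma XS0 p q dt k : good p q dt -> XS p q dt k 0 = dx dt + INR k * rot_number p q.
Proof.
  intros G. destruct (good_unpack p q dt G) as (D0 & Y0 & _).
  rewrite XS_closed, D0, Y0, Tf0. ring.
Qed.

Lemma DY_ident p q dt : (1 <= q)%nat -> good p q dt -> forall e, Rabs e < deb dt ->
  Dfun dt e = - / INR q * Sf p q dt q e /\
  Yfun dt e = / INR q * (cN q * Dfun dt e + Tf p q dt q e).
Proof.
  intros Hq G e He. destruct (good_unpack p q dt G) as (_ & _ & H). destruct (H e He) as [HR HS].
  assert (Hq0 : INR q <> 0) by (apply not_0_INR; lia).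
  unfold nR, nS in *.
  change (fst (iterT q (rot_number p q) e (Dfun dt e) (df dt) (dx dt) (Yfun dt e))) with (XS p q dt q e) in HR.
  change (snd (iterT q (rot_number p q) e (Dfun dt e) (df dt) (dx dt) (Yfun dt e))) with (YS p q dt q e) in HS.
  rewrite YS_closed in HS. rewrite XS_closed in HR.
  split.
  - apply (Rmult_eq_reg_l (INR q)); auto. field_simplify; auto. lra.
  - apply (Rmult_eq_reg_l (INR q)); auto. field_simplify; auto. lra.
Qed.

Lemma Sm_mono r r' g : r' <= r -> Sm r g -> Sm r' g.
Proof. intros Hr H n e He. apply H. lra. Qed.

Lemma good_smooth p q dt : good p q dt -> exists r, 0 < r /\ r <= deb dt /\
  Sm r (Dfun dt) /\ Sm r (Yfun dt) /\ fsmooth (df dt).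
Proof.
  intros G. unfold good, solution_data in G. cbv zeta in G.
  destruct G as (_ & Han & Heb & _ & HaD & HaY & _).
  destruct (analytic2_smooth (dD dt) (deb dt) (dx dt) Heb HaD) as [r1 [H1 [H1b S1]]].
  destruct (analytic2_smooth (dY dt) (deb dt) (dx dt) Heb HaY) as [r2 [H2 [H2b S2]]].
  exists (Rmin r1 r2). split; [apply Rmin_glb_lt; auto|]. split.
  - eapply Rle_trans; [apply Rmin_l| exact H1b].
  - split; [|split].
    + eapply Sm_mono; [apply Rmin_l| exact S1].
    + eapply Sm_mono; [apply Rmin_r| exact S2].
    + apply analytic_fsmooth; auto.
Qed.

Fixpoint Sx (k : nat) : pexpr :=
  match k with O => PC 0 | S k => PAdd (Sx k) (PMul (PV KE 0) (PV (KF k) 0)) end.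
Fixpoint Tx (k : nat) : pexpr :=
  match k with O => PC 0 | S k => PAdd (Tx k) (Sx (S k)) end.

Lemma Sx_ev p q dt k e : ev (ENV p q dt e) (Sx k) = Sf p q dt k e.
Proof. induction k; simpl; [reflexivity|]. rewrite IHk. reflexivity. Qed.
Lemma Tx_ev p q dt k e : ev (ENV p q dt e) (Tx k) = Tf p q dt k e.
Proof. induction k; [reflexivity|]. simpl ev. rewrite IHk. simpl (ev _ (Sx (S k))). rewrite Sx_ev. reflexivity. Qed.


Lemma Sm_all p q dt r : Sm r (Dfun dt) -> Sm r (Yfun dt) -> fsmooth (df dt) ->
  (forall j, Sm r (Fj p q dt j)) /\ (forall j, Sm r (hj p q dt j)) /\
  (forall k, Sm r (Sf p q dt k)) /\ (forall k, Sm r (Tf p q dt k)).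
Proof.
  intros HD HY Hf.
  pose proof (env_der (rot_number p q) (df dt) (Dfun dt) (Yfun dt) (dx dt) r HD HY Hf) as HE.
  pose proof (Sm_ev r _ HE) as HS.
  split; [|split; [|split]].
  - intros j. exact (HS (PV (KF j) 0)).
  - intros j. exact (HS (PMul (PV KE 0) (PV (KF j) 0))).
  - intros k. eapply Sm_ext; [|exact (HS (Sx k))]. intros t. apply Sx_ev.
  - intros k. eapply Sm_ext; [|exact (HS (Tx k))]. intros t. apply Tx_ev.
Qed.

Lemma Dn_plus0 r (g h : R -> R) n : 0 < r -> Sm r g -> Sm r h ->
  Derive_n (fun t => g t + h t) n 0 = Derive_n g n 0 + Derive_n h n 0.
Proof.
  intros Hr Hg Hh. apply Derive_n_plus; eapply Sm_loc; eauto; rewrite Rabs_R0; auto.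
Qed.

Lemma Dn_const0 (c : R) n : Derive_n (fun _ => c) (S n) 0 = 0.
Proof. apply Derive_n_const. Qed.

Lemma VF_eq p q dt r j m : 0 < r -> Sm r (Dfun dt) -> Sm r (Yfun dt) -> fsmooth (df dt) ->
  Derive_n (Fj p q dt j) m 0 = ev (ENV p q dt 0) (Nat.iter m der (PV (KF j) 0)).
Proof.
  intros Hr HD HY Hf.
  pose proof (env_der (rot_number p q) (df dt) (Dfun dt) (Yfun dt) (dx dt) r HD HY Hf) as HE.
  transitivity (Derive_n (fun t => ev (ENV p q dt t) (PV (KF j) 0)) m 0); [reflexivity|].
  apply (Dn_ev r _ HE (PV (KF j) 0) m 0). rewrite Rabs_R0; auto.
Qed.


Lemma Sm_scal r c g : Sm r g -> Sm r (fun t => c * g t).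
Proof.
  intros H n e He.
  assert (E : Derive_n (fun t => c * g t) n = fun t => c * Derive_n g n t).
  { apply functional_extensionality; intro; apply Derive_n_scal_l. }
  rewrite E. apply ex_derive_scal. apply H; auto.
Qed.

Definition VD n dt := Derive_n (Dfun dt) n 0.
Definition VY n dt := Derive_n (Yfun dt) n 0.
Definition VH p q j n dt := Derive_n (hj p q dt j) n 0.
Definition VF p q j n dt := Derive_n (Fj p q dt j) n 0.
Definition VS p q k n dt := Derive_n (Sf p q dt k) n 0.
Definition VT p q k n dt := Derive_n (Tf p q dt k) n 0.

Lemma deriv_facts p q dt : (1 <= q)%nat -> good p q dt ->
 (forall j m, VH p q j (S m) dt = INR (S m) * VF p q j m dt) /\
 (forall j, VH p q j 0 dt = 0) /\
 (forall k n, VS p q (S k) n dt = VS p q k n dt + VH p q k n dt) /\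
 (forall n, VS p q 0 n dt = 0) /\
 (forall k n, VT p q (S k) n dt = VT p q k n dt + VS p q (S k) n dt) /\
 (forall n, VT p q 0 n dt = 0) /\
 (forall n, VD n dt = - / INR q * VS p q q n dt) /\
 (forall n, VY n dt = / INR q * (cN q * VD n dt + VT p q q n dt)) /\
 (forall j m, VF p q j m dt = ev (ENV p q dt 0) (Nat.iter m der (PV (KF j) 0))).
Proof.
  intros Hq G. destruct (good_smooth p q dt G) as (r & Hr & Hrb & HD & HY & Hf).
  destruct (Sm_all p q dt r HD HY Hf) as (SF & SH & SS & ST).
  assert (Hl : locally 0 (fun t => Rabs t < deb dt)) by (apply ball_loc; rewrite Rabs_R0; lra).
  split; [|split; [|split; [|split; [|split; [|split; [|split; [|split]]]]]]].
  - intros j m. unfold VH, VF. apply (leib0 r); auto.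
  - intros j. unfold VH, hj. simpl. ring.
  - intros k n. unfold VS, VH.
    transitivity (Derive_n (fun t => Sf p q dt k t + hj p q dt k t) n 0); [reflexivity|].
    apply (Dn_plus0 r); auto.
  - intros [|n]; [reflexivity|]. exact (Dn_const0 0 n).
  - intros k n. unfold VT, VS.
    transitivity (Derive_n (fun t => Tf p q dt k t + Sf p q dt (S k) t) n 0); [reflexivity|].
    apply (Dn_plus0 r); auto.
  - intros [|n]; [reflexivity|]. exact (Dn_const0 0 n).
  - intros n. unfold VD, VS.
    rewrite (Derive_n_ext_loc _ (fun t => - / INR q * Sf p q dt q t)).
    + apply Derive_n_scal_l.
    + eapply filter_imp; [|exact Hl]. intros t Ht. apply (DY_ident p q dt Hq G t Ht).
  - intros n. unfold VY, VD, VT.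
    rewrite (Derive_n_ext_loc _ (fun t => / INR q * (cN q * Dfun dt t + Tf p q dt q t))).
    + rewrite Derive_n_scal_l. f_equal.
      rewrite (Dn_plus0 r); auto.
      * rewrite Derive_n_scal_l. reflexivity.
      * apply Sm_scal; auto.
    + eapply filter_imp; [|exact Hl]. intros t Ht. apply (DY_ident p q dt Hq G t Ht).
  - intros j m. unfold VF. apply (VF_eq p q dt r j m); auto.
Qed.


Definition IHDY p q m := forall a, (a <= m)%nat ->
  Uni p q (Z.of_nat a) a (VD a) /\ Uni p q (Z.of_nat a) a (VY a).

Lemma UniVF p q m j : (1 <= q)%nat -> (j < q)%nat -> IHDY p q m ->
  Uni p q (Z.of_nat m + 1) (S m) (VF p q j m).
Proof.
  intros Hq Hj IH.
  apply (Uni_ext p q _ _ (fun dt => ev (ENV p q dt 0) (Nat.iter m der (PV (KF j) 0)))).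
  { intros dt G. destruct (deriv_facts p q dt Hq G) as (_&_&_&_&_&_&_&_&H). symmetry; apply H. }
  destruct (iter_props j j m (le_n j)) as [Hw Hv].
  eapply Uni_mono; [exact Hw| apply le_n|].
  apply Uni_ev.
  eapply allv_imp; [|exact Hv].
  intros a l H. destruct a as [| | |k]; simpl in H.
  - destruct (IH l H) as [A _]. eapply Uni_mono; [| |exact A]; simpl; lia.
  - destruct (IH l H) as [_ A]. eapply Uni_mono; [| |exact A]; simpl; lia.
  - destruct l as [|[|l]].
    + apply Uni_zero.
    + eapply Uni_mono; [| apply le_n| apply (Uni_const p q (S m) 1)]. simpl; lia.
    + apply Uni_zero.
  - destruct H as [Hk Hl].
    apply (Uni_ext p q _ _ (fun dt => tgt p q dt k l)).
    { intros dt G. unfold tgt. simpl. fold (XS p q dt k 0). rewrite (XS0 p q dt k G). reflexivity. }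
    apply Uni_var; lia.
Qed.

Lemma UniVH p q m j : (1 <= q)%nat -> (j < q)%nat -> IHDY p q m ->
  Uni p q (Z.of_nat (S m)) (S m) (VH p q j (S m)).
Proof.
  intros Hq Hj IH.
  apply (Uni_ext p q _ _ (fun dt => INR (S m) * VF p q j m dt)).
  { intros dt G. destruct (deriv_facts p q dt Hq G) as (H&_). symmetry; apply H. }
  eapply Uni_mono; [| apply le_n| apply Uni_mul; [apply Uni_const| apply (UniVF p q m j Hq Hj IH)]].
  lia.
Qed.

Lemma UniVH0 p q j : (1 <= q)%nat -> Uni p q 0 0 (VH p q j 0).
Proof.
  intros Hq. apply (Uni_ext p q _ _ (fun _ => 0)); [|apply Uni_zero].
  intros dt G. destruct (deriv_facts p q dt Hq G) as (_&H&_). symmetry; apply H.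
Qed.

Lemma UniDY p q N : (1 <= q)%nat -> (forall j, (j < q)%nat -> Uni p q (Z.of_nat N) N (VH p q j N)) ->
  Uni p q (Z.of_nat N) N (VD N) /\ Uni p q (Z.of_nat N) N (VY N).
Proof.
  intros Hq HH.
  assert (HS : forall k, (k <= q)%nat -> Uni p q (Z.of_nat N) N (VS p q k N)).
  { induction k; intros Hk.
    - apply (Uni_ext p q _ _ (fun _ => 0)); [|apply Uni_zero].
      intros dt G. destruct (deriv_facts p q dt Hq G) as (_&_&_&H&_). symmetry; apply H.
    - apply (Uni_ext p q _ _ (fun dt => VS p q k N dt + VH p q k N dt)).
      { intros dt G. destruct (deriv_facts p q dt Hq G) as (_&_&H&_). symmetry; apply H. }
      eapply Uni_mono; [| apply le_n| apply Uni_add; [apply IHk; lia| apply HH; lia]]. lia. }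
  assert (HT : forall k, (k <= q)%nat -> Uni p q (Z.of_nat N) N (VT p q k N)).
  { induction k; intros Hk.
    - apply (Uni_ext p q _ _ (fun _ => 0)); [|apply Uni_zero].
      intros dt G. destruct (deriv_facts p q dt Hq G) as (_&_&_&_&_&H&_). symmetry; apply H.
    - apply (Uni_ext p q _ _ (fun dt => VT p q k N dt + VS p q (S k) N dt)).
      { intros dt G. destruct (deriv_facts p q dt Hq G) as (_&_&_&_&H&_). symmetry; apply H. }
      eapply Uni_mono; [| apply le_n| apply Uni_add; [apply IHk; lia| apply HS; lia]]. lia. }
  assert (HD : Uni p q (Z.of_nat N) N (VD N)).
  { apply (Uni_ext p q _ _ (fun dt => - / INR q * VS p q q N dt)).
    { intros dt G. destruct (deriv_facts p q dt Hq G) as (_&_&_&_&_&_&H&_). symmetry; apply H. }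
    eapply Uni_mono; [| apply le_n| apply Uni_mul; [apply Uni_const| apply HS; lia]]. lia. }
  split; auto.
  apply (Uni_ext p q _ _ (fun dt => / INR q * (cN q * VD N dt + VT p q q N dt))).
  { intros dt G. destruct (deriv_facts p q dt Hq G) as (_&_&_&_&_&_&_&H&_). symmetry; apply H. }
  eapply Uni_mono; [| apply le_n| apply Uni_mul; [apply Uni_const| apply Uni_add; [apply Uni_mul; [apply Uni_const| exact HD]| apply HT; lia]]].
  lia.
Qed.

Lemma Uni_all p q : (1 <= q)%nat -> forall n, IHDY p q n.
Proof.
  intros Hq n. induction n.
  - intros a Ha. assert (a = 0%nat) by lia. subst a.
    apply (UniDY p q 0 Hq). intros j _. apply UniVH0; auto.
  - intros a Ha. destruct (Nat.eq_dec a (S n)) as [->|Hne].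
    + apply (UniDY p q (S n) Hq). intros j Hj. apply UniVH; auto.
    + apply IHn. lia.
Qed.


Lemma fold_plus_acc (l : list R) a : fold_right Rplus a l = fold_right Rplus 0 l + a.
Proof. induction l; simpl; [ring|rewrite IHl; ring]. Qed.

Lemma fold_seq (g : nat -> R) n : fold_right Rplus 0 (map g (seq 0 n)) = sumN g n.
Proof.
  induction n; [reflexivity|].
  rewrite seq_S, map_app, fold_right_app. simpl. rewrite fold_plus_acc, IHn. ring.
Qed.

Lemma sumN_plus a b n : sumN (fun k => a k + b k) n = sumN a n + sumN b n.
Proof. induction n; simpl; [ring|rewrite IHn; ring]. Qed.

Lemma cN_closed n : cN n = INR n * (INR n + 1) / 2.
Proof. induction n. unfold cN; simpl; field. change (cN (S n)) with (cN n + INR (S n)). rewrite IHn, S_INR. field. Qed.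

Lemma double_sum (G : nat -> R) n :
  sumN (fun i => sumN G (S i)) n = sumN (fun k => (INR n - INR k) * G k) n.
Proof.
  induction n; [reflexivity|].
  change (sumN (fun i => sumN G (S i)) (S n)) with (sumN (fun i => sumN G (S i)) n + sumN G (S n)).
  rewrite IHn.
  change (sumN (fun k => (INR (S n) - INR k) * G k) (S n)) with
     (sumN (fun k => (INR (S n) - INR k) * G k) n + (INR (S n) - INR n) * G n).
  rewrite (sumN_ext (fun k => (INR (S n) - INR k) * G k) (fun k => (INR n - INR k) * G k + G k)).
  2:{ intros i. rewrite S_INR. ring. }
  rewrite sumN_plus. change (sumN G (S n)) with (sumN G n + G n). rewrite S_INR. ring.
Qed.

Theorem mainTheorem5 (p : Z) (q : nat) (Hq : (1 <= q)%nat) :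
  (forall n : nat, (1 <= n)%nat ->
     exists PD PY : polynomial,
       poly_vars_deg q n n PD /\ poly_vars_deg q n n PY /\
       forall (f : R -> R) (eb eta : R) (Delta Y : R -> R -> R),
         solution_data p q f eb eta Delta Y ->
         forall x : R,
           eps_coeff Delta n x =
             eval_poly PD (fun k l => Derive_n f l (x + INR k * rot_number p q)) /\
           eps_coeff Y n x =
             eval_poly PY (fun k l => Derive_n f l (x + INR k * rot_number p q))) /\
  (forall (f : R -> R) (eb eta : R) (Delta Y : R -> R -> R),
     solution_data p q f eb eta Delta Y ->
     forall x : R,
       eps_coeff Delta 1 x = - fbar q (rot_number p q) f x /\
       eps_coeff Y 1 x =
         - ((INR q + 1) / 2) * fbar q (rot_number p q) f x
         + fbarbar q (rot_number p q) f x).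
Proof.
  split.
  - intros n Hn. destruct (Uni_all p q Hq n n (le_n n)) as [UD UY].
    destruct (Uni_mul p q _ _ _ _ _ UD (Uni_const p q n (/ INR (Factorial.fact n)))) as [PD [HPD ED]].
    destruct (Uni_mul p q _ _ _ _ _ UY (Uni_const p q n (/ INR (Factorial.fact n)))) as [PY [HPY EY]].
    exists PD, PY.
    assert (Conv : forall P, pvd q n (Z.of_nat n + 0) P -> poly_vars_deg q n n P).
    { intros P H. unfold pvd, poly_vars_deg in *. eapply Forall_impl; [|exact H].
      intros m [A B]. split; auto. lia. }
    split; [auto|]. split; [auto|].
    intros f eb eta Delta Y Hsd x.
    specialize (ED (mkdat f eb eta Delta Y x) Hsd). specialize (EY (mkdat f eb eta Delta Y x) Hsd).
    unfold eps_coeff. split; [exact ED| exact EY].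
  - intros f eb eta Delta Y Hsd x.
    set (dt := mkdat f eb eta Delta Y x).
    assert (G : good p q dt) by exact Hsd.
    destruct (deriv_facts p q dt Hq G) as (FH & _ & FS & FS0 & FT & FT0 & FD & FY & FF).
    set (Gs := fun k => f (x + INR k * rot_number p q)).
    assert (H1 : forall j, VH p q j 1 dt = Gs j).
    { intros j. rewrite FH, FF. simpl. unfold Gs. pose proof (XS0 p q dt j G) as E. unfold XS in E. simpl in E. rewrite E. ring. }
    assert (HS : forall k, VS p q k 1 dt = sumN Gs k).
    { induction k; [apply FS0|]. rewrite FS, IHk, H1. reflexivity. }
    assert (HT : forall k, VT p q k 1 dt = sumN (fun i => sumN Gs (S i)) k).
    { induction k; [apply FT0|]. rewrite FT, IHk, HS. reflexivity. }
    assert (Hq0 : INR q <> 0) by (apply not_0_INR; lia).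
    assert (HD1 : VD 1 dt = - fbar q (rot_number p q) f x).
    { rewrite FD, HS. unfold fbar. rewrite fold_seq. fold Gs. ring. }
    unfold eps_coeff. change (Factorial.fact 1) with 1%nat. simpl INR.
    change (Derive_n (fun e => Delta x e) 1 0) with (VD 1 dt).
    change (Derive_n (fun e => Y x e) 1 0) with (VY 1 dt).
    split.
    + rewrite HD1. field.
    + rewrite FY, HD1, HT, double_sum, cN_closed. unfold fbarbar.
      rewrite fold_seq. unfold fbar. rewrite fold_seq. fold Gs.
      unfold Gs. req. field. auto.
Qed.
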